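(* Let $\tau,t\in\mathbb{R}$ and let $\beta_n=\beta_n(\tau,t)$ be the recurrence coefficients of the monic orthogonal polynomials for the weight $\omega(x;\tau,t)=\exp(-x^6+\tau x^4+tx^2)$ on $\mathbb{R}$. Then, for $n\ge1$, $\beta_n$ and $\beta_{n+1}$ satisfy \begin{align*} &\frac{\partial^2\beta_n}{\partial t^2}-3\left(\beta_n+\beta_{n+1}-\tfrac29\tau\right)\frac{\partial\beta_n}{\partial t}+\beta_n^3+6\beta_n^2\beta_{n+1}+3\beta_n\beta_{n+1}^2-\tfrac23\tau\beta_n(\beta_n+2\beta_{n+1})-\tfrac13t\beta_n=\tfrac16n,\\ &\frac{\partial^2\beta_{n+1}}{\partial t^2}+3\left(\beta_n+\beta_{n+1}-\tfrac29\tau\right)\frac{\partial\beta_{n+1}}{\partial t}+\beta_{n+1}^3+6\beta_{n+1}^2\beta_n+3\beta_{n+1}\beta_n^2-\tfrac23\tau\beta_{n+1}(2\beta_n+\beta_{n+1})-\tfrac13t\beta_{n+1}=\tfrac16(n+1). \end{align*}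
   Context: The monic orthogonal polynomials satisfy $P_{n+1}(x)=xP_n(x)-\beta_nP_{n-1}(x)$ with $P_{-1}=0$, $P_0=1$, where $\beta_n>0$ for $n\ge1$. The convention $\beta_0=\beta_{-1}=0$ is used. *)

(* Defs.v *)
From Stdlib Require Import Reals.
From Coquelicot Require Import Coquelicot.
Open Scope R_scope.

Definition omega (tau t x : R) : R := exp (- x ^ 6 + tau * x ^ 4 + t * x ^ 2).

Fixpoint psum (c : nat -> R) (n : nat) (x : R) : R :=
  match n with
  | O => 0
  | S m => psum c m x + c m * x ^ m
  end.

Definition monic_poly_fun (n : nat) (p : R -> R) : Prop :=
  exists c : nat -> R, forall x : R, p x = x ^ n + psum c n x.

Definition is_RInt_R (f : R -> R) (v : R) : Prop :=
  is_RInt_gen f (Rbar_locally m_infty) (Rbar_locally p_infty) v.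

(* Main.v *)
Require Import Defs.
From Stdlib Require Import Reals Lra Lia Psatz Classical Arith ZArith Wf_nat.
From Coquelicot Require Import Coquelicot.
Open Scope R_scope.

Lemma D_mult (f g : R -> R) (x df dg : R) : is_derive f x df -> is_derive g x dg ->
  is_derive (fun y => f y * g y) x (df * g x + f x * dg).
Proof. intros Hf Hg. apply (is_derive_mult f g x df dg Hf Hg). intros; apply Rmult_comm. Qed.
Lemma D_plus (f g : R -> R) (x df dg : R) : is_derive f x df -> is_derive g x dg ->
  is_derive (fun y => f y + g y) x (df + dg).
Proof. intros Hf Hg. apply (is_derive_plus f g x df dg Hf Hg). Qed.
Lemma D_minus (f g : R -> R) (x df dg : R) : is_derive f x df -> is_derive g x dg ->
  is_derive (fun y => f y - g y) x (df - dg).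
Proof. intros Hf Hg. apply (is_derive_minus f g x df dg Hf Hg). Qed.
Lemma D_const (a x : R) : is_derive (fun _ => a) x 0.
Proof. apply (is_derive_const a x). Qed.
Lemma D_ext (f g : R -> R) (x l : R) : (forall y, f y = g y) -> is_derive f x l -> is_derive g x l.
Proof. intros H Hf. apply (is_derive_ext f g x l); auto. Qed.
Lemma D_ext_val (f : R -> R) (x l l' : R) : is_derive f x l -> l = l' -> is_derive f x l'.
Proof. intros; subst; auto. Qed.

Lemma exp_pow_n (x : R) (n : nat) : exp x ^ n = exp (INR n * x).
Proof.
  induction n as [|n IH]; simpl. rewrite Rmult_0_l, exp_0; reflexivity.
  rewrite IH, <- exp_plus. f_equal. destruct n; simpl; ring.
Qed.

Lemma pow_exp_bound (k : nat) (y : R) : 0 <= y -> y ^ k <= INR k ^ k * exp y.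
Proof.
  intros Hy. destruct k as [|k].
  - simpl. pose proof (exp_ineq1_le y). lra.
  - set (a := INR (S k)). assert (Ha : 0 < a) by (apply lt_0_INR; lia).
    assert (H1 : y / a <= exp (y / a)) by (pose proof (exp_ineq1_le (y/a)); lra).
    assert (H2 : (y / a) ^ S k <= exp (y / a) ^ S k).
    { apply pow_incr. split; [|exact H1]. apply Rdiv_le_0_compat; lra. }
    rewrite exp_pow_n in H2. fold a in H2.
    replace (a * (y / a)) with y in H2 by (field; lra).
    replace (y ^ S k) with (a ^ S k * (y / a) ^ S k).
    2:{ rewrite <- Rpow_mult_distr. f_equal. field. lra. }
    apply Rmult_le_compat_l; [apply pow_le; lra | exact H2].
Qed.

Lemma poly6_bound (tau t : R) : exists M, forall x,
  2 * Rabs x - x ^ 6 + tau * x ^ 4 + t * x ^ 2 <= M.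
Proof.
  set (K := 3 + Rabs tau + Rabs t).
  exists (2 * K + Rabs tau * K ^ 4 + Rabs t * K ^ 2).
  intros x. set (a := Rabs x).
  assert (Ha : 0 <= a) by apply Rabs_pos.
  assert (E2 : x ^ 2 = a ^ 2) by (unfold a; rewrite RPow_abs; rewrite Rabs_right; [reflexivity| apply Rle_ge, pow2_ge_0]).
  assert (E4 : x ^ 4 = a ^ 4).
  { unfold a; rewrite RPow_abs. rewrite Rabs_right; [reflexivity|]. apply Rle_ge.
    replace (x^4) with ((x^2)^2) by ring. apply pow2_ge_0. }
  assert (E6 : x ^ 6 = a ^ 6).
  { unfold a; rewrite RPow_abs. rewrite Rabs_right; [reflexivity|]. apply Rle_ge.
    replace (x^6) with ((x^3)^2) by ring. apply pow2_ge_0. }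
  rewrite E2, E4, E6.
  assert (Tt : tau * a^4 <= Rabs tau * a^4).
  { apply Rmult_le_compat_r. apply pow_le; lra. apply Rle_abs. }
  assert (Tt2 : t * a^2 <= Rabs t * a^2).
  { apply Rmult_le_compat_r. apply pow_le; lra. apply Rle_abs. }
  assert (Pt : 0 <= Rabs tau) by apply Rabs_pos.
  assert (Pt2 : 0 <= Rabs t) by apply Rabs_pos.
  destruct (Rle_dec a K) as [HaK|HaK].
  - assert (a^4 <= K^4) by (apply pow_incr; lra).
    assert (a^2 <= K^2) by (apply pow_incr; lra).
    assert (0 <= a^6) by (apply pow_le; lra).
    assert (Rabs tau * a^4 <= Rabs tau * K^4) by (apply Rmult_le_compat_l; lra).
    assert (Rabs t * a^2 <= Rabs t * K^2) by (apply Rmult_le_compat_l; lra).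
    assert (0 <= K ^ 4) by (apply pow_le; unfold K; lra).
    assert (0 <= K ^ 2) by (apply pow_le; unfold K; lra).
    assert (0 <= Rabs tau * K^4) by (apply Rmult_le_pos; lra).
    assert (0 <= Rabs t * K^2) by (apply Rmult_le_pos; lra).
    lra.
  - assert (HK : K < a) by lra. assert (H1 : 1 <= a) by (unfold K in HK; lra).
    assert (a2 : a <= a^2) by nra.
    assert (a4 : a^2 <= a^4) by nra.
    assert (a5 : a^4 <= a^5) by nra.
    assert (a6 : K * a^5 <= a^6) by (assert (0 <= a^5) by nra; nra).
    assert (0 <= K ^ 4) by (apply pow_le; unfold K; lra).
    assert (0 <= K ^ 2) by (apply pow_le; unfold K; lra).
    assert (0 <= Rabs tau * K^4) by (apply Rmult_le_pos; lra).
    assert (0 <= Rabs t * K^2) by (apply Rmult_le_pos; lra).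
    assert (Rabs tau * a^4 <= Rabs tau * a^5) by (apply Rmult_le_compat_l; lra).
    assert (Rabs t * a^2 <= Rabs t * a^5) by (apply Rmult_le_compat_l; lra).
    assert (Ek : K * a^5 = 3*a^5 + Rabs tau * a^5 + Rabs t * a^5) by (unfold K; ring).
    assert (0 <= a^5) by lra.
    assert (L0 : 2 * a - a ^ 6 + tau * a ^ 4 + t * a ^ 2 <= 0).
    { set (u := a^6) in *. set (v := a^5) in *. set (w := a^4) in *. set (z := a^2) in *. set (p := Rabs tau * v) in *. set (q := Rabs t * v) in *. lra. }
    assert (0 <= K) by (unfold K; lra). lra.
Qed.

Lemma omega_pos tau t x : 0 < omega tau t x.
Proof. unfold omega; apply exp_pos. Qed.

Lemma mono_bound (tau t : R) (k : nat) : exists C, 0 <= C /\ forall x,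
  Rabs x ^ k * omega tau t x <= C * exp (- Rabs x).
Proof.
  destruct (poly6_bound tau t) as [M HM].
  exists (INR k ^ k * exp M). split.
  { apply Rmult_le_pos; [apply pow_le, pos_INR | left; apply exp_pos]. }
  intros x.
  pose proof (pow_exp_bound k (Rabs x) (Rabs_pos x)) as H.
  pose proof (omega_pos tau t x) as Hw.
  apply Rle_trans with (INR k ^ k * exp (Rabs x) * omega tau t x).
  { apply Rmult_le_compat_r; lra. }
  rewrite !Rmult_assoc. apply Rmult_le_compat_l; [apply pow_le, pos_INR|].
  unfold omega. rewrite <- !exp_plus.
  assert (Hle : Rabs x + (- x ^ 6 + tau * x ^ 4 + t * x ^ 2) <= M + - Rabs x) by (specialize (HM x); lra).
  destruct (Rle_lt_or_eq_dec _ _ Hle) as [Hl|He].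
  - left; apply exp_increasing; exact Hl.
  - rewrite He; right; reflexivity.
Qed.

Definition MI := Rbar_locally m_infty.
Definition PI' := Rbar_locally p_infty.
#[local] Instance PF'_MI : ProperFilter' (Rbar_locally m_infty) := Proper_StrongProper _ (Rbar_locally_filter _).
#[local] Instance PF'_PI : ProperFilter' (Rbar_locally p_infty) := Proper_StrongProper _ (Rbar_locally_filter _).

Lemma iR_ext (f g : R -> R) (l : R) : (forall x, f x = g x) -> is_RInt_R f l -> is_RInt_R g l.
Proof.
  intros H Hf. unfold is_RInt_R in *. eapply is_RInt_gen_ext; [| exact Hf].
  apply filter_forall. intros; auto.
Qed.
Lemma iR_plus (f g : R -> R) (a b : R) : is_RInt_R f a -> is_RInt_R g b ->
  is_RInt_R (fun x => f x + g x) (a + b).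
Proof. intros Hf Hg. exact (is_RInt_gen_plus f g a b Hf Hg). Qed.
Lemma iR_minus (f g : R -> R) (a b : R) : is_RInt_R f a -> is_RInt_R g b ->
  is_RInt_R (fun x => f x - g x) (a - b).
Proof. intros Hf Hg. exact (is_RInt_gen_minus f g a b Hf Hg). Qed.
Lemma iR_scal (f : R -> R) (k a : R) : is_RInt_R f a -> is_RInt_R (fun x => k * f x) (k * a).
Proof. intros Hf. exact (is_RInt_gen_scal f k a Hf). Qed.
Lemma iR_unique (f : R -> R) (a b : R) : is_RInt_R f a -> is_RInt_R f b -> a = b.
Proof.
  intros Ha Hb. unfold is_RInt_R in *.
  pose proof (is_RInt_gen_unique (V:=R_CompleteNormedModule) f a Ha) as E1.
  pose proof (is_RInt_gen_unique (V:=R_CompleteNormedModule) f b Hb) as E2. congruence.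
Qed.
Lemma iR_exists (f : R -> R) : ex_RInt_gen f MI PI' -> is_RInt_R f (RInt_gen f MI PI').
Proof. intros H. apply (RInt_gen_correct (V:=R_CompleteNormedModule)); auto. Qed.

Lemma cont_exp_lin (C s : R) (x : R) : continuous (fun y => C * exp (s * y)) x.
Proof. apply (ex_derive_continuous (K:=R_AbsRing) (V:=R_NormedModule)). auto_derive. auto. Qed.

Lemma RInt_exp_r (C b : R) : is_RInt (fun y => C * exp (- y)) 0 b (C - C * exp (- b)).
Proof.
  replace (C - C * exp (- b)) with (minus ((fun y => - C * exp (- y)) b) ((fun y => - C * exp (- y)) 0)).
  2:{ unfold minus, plus, opp; simpl. rewrite Ropp_0, exp_0. ring. }
  apply (is_RInt_derive (V:=R_CompleteNormedModule) (fun y => - C * exp (- y))).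
  - intros x _. auto_derive; auto. ring.
  - intros x _. (eapply continuous_ext; [|apply (cont_exp_lin C (-1) x)]; intros; simpl; f_equal; f_equal; ring).
Qed.

Lemma RInt_exp_l (C a : R) : is_RInt (fun y => C * exp y) a 0 (C - C * exp a).
Proof.
  replace (C - C * exp a) with (minus ((fun y => C * exp y) 0) ((fun y => C * exp y) a)).
  2:{ unfold minus, plus, opp; simpl. rewrite exp_0. ring. }
  apply (is_RInt_derive (V:=R_CompleteNormedModule) (fun y => C * exp y)).
  - intros x _. auto_derive; auto. ring.
  - intros x _. eapply continuous_ext; [|apply (cont_exp_lin C 1 x)]; intros; simpl; f_equal; f_equal; ring.
Qed.

Lemma ball_R (L eps y : R) : Rabs (y - L) < eps -> ball L eps y.
Proof. intros H. exact H. Qed.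

Lemma half_right (f : R -> R) (C : R) :
  (forall x, continuous f x) -> (forall x, 0 <= x -> 0 <= f x <= C * exp (- x)) ->
  ex_RInt_gen f (at_point 0) PI'.
Proof.
  intros Hc Hb.
  assert (Hex : forall a b, ex_RInt f a b) by (intros; apply (ex_RInt_continuous (V:=R_CompleteNormedModule)); intros; apply Hc).
  assert (Hexg : forall a b, ex_RInt (fun y => C * exp (- y)) a b).
  { intros; apply (ex_RInt_continuous (V:=R_CompleteNormedModule)); intros. eapply continuous_ext; [|apply (cont_exp_lin C (-1) z)]; intros; simpl; f_equal; f_equal; ring. }
  assert (HG : forall b, 0 <= b -> RInt f 0 b <= C).
  { intros b Hb0. apply Rle_trans with (RInt (fun y => C * exp (- y)) 0 b).
    - apply RInt_le; [lra| apply Hex| apply Hexg| intros x Hx; apply Hb; lra].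
    - rewrite (is_RInt_unique (V:=R_CompleteNormedModule) _ _ _ _ (RInt_exp_r C b)).
      assert (0 <= C) by (pose proof (Hb 0 (Rle_refl 0)); rewrite Ropp_0, exp_0 in H; lra).
      pose proof (exp_pos (- b)). nra. }
  assert (Hmono : forall b0 b, 0 <= b0 <= b -> RInt f 0 b0 <= RInt f 0 b).
  { intros b0 b Hbb. rewrite <- (RInt_Chasles (V:=R_CompleteNormedModule) f 0 b0 b); auto.
    assert (0 <= RInt f b0 b) by (apply RInt_ge_0; [lra| apply Hex | intros; apply Hb; lra]).
    unfold plus; simpl; lra. }
  set (E := fun y => exists b, 0 <= b /\ y = RInt f 0 b).
  destruct (completeness E) as [L [HL1 HL2]].
  { exists C. intros y [b [Hb0 ->]]. auto. }
  { exists (RInt f 0 0). exists 0. split; auto; lra. }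
  exists L. intros P [eps HP]. unfold filtermapi.
  destruct (classic (exists b, 0 <= b /\ L - eps < RInt f 0 b)) as [[b0 [Hb0 Hlt]]|Hno].
  2:{ exfalso. assert (L <= L - eps); [|pose proof (cond_pos eps); lra].
      apply HL2. intros y [b [Hb' ->]]. apply Rnot_lt_le. intros Hc'. apply Hno. exists b. auto. }
  apply Filter_prod with (fun a => a = 0) (fun b => b0 < b).
  - reflexivity.
  - exists b0. auto.
  - intros a b -> Hb1. simpl. exists (RInt f 0 b). split.
    + apply (RInt_correct (V:=R_CompleteNormedModule)); auto.
    + apply HP. apply ball_R.
      assert (RInt f 0 b <= L) by (apply HL1; exists b; split; auto; lra).
      assert (RInt f 0 b0 <= RInt f 0 b) by (apply Hmono; lra).
      apply Rabs_def1; lra.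
Qed.

Lemma half_left (f : R -> R) (C : R) :
  (forall x, continuous f x) -> (forall x, x <= 0 -> 0 <= f x <= C * exp x) ->
  ex_RInt_gen f MI (at_point 0).
Proof.
  intros Hc Hb.
  assert (Hex : forall a b, ex_RInt f a b) by (intros; apply (ex_RInt_continuous (V:=R_CompleteNormedModule)); intros; apply Hc).
  assert (Hexg : forall a b, ex_RInt (fun y => C * exp y) a b).
  { intros; apply (ex_RInt_continuous (V:=R_CompleteNormedModule)); intros. eapply continuous_ext; [|apply (cont_exp_lin C 1 z)]; intros; simpl; f_equal; f_equal; ring. }
  assert (HG : forall a, a <= 0 -> RInt f a 0 <= C).
  { intros a Ha0. apply Rle_trans with (RInt (fun y => C * exp y) a 0).
    - apply RInt_le; [lra| apply Hex| apply Hexg| intros x Hx; apply Hb; lra].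
    - rewrite (is_RInt_unique (V:=R_CompleteNormedModule) _ _ _ _ (RInt_exp_l C a)).
      assert (0 <= C) by (pose proof (Hb 0 (Rle_refl 0)); rewrite exp_0 in H; lra).
      pose proof (exp_pos a). nra. }
  assert (Hmono : forall a0 a, a <= a0 <= 0 -> RInt f a0 0 <= RInt f a 0).
  { intros a0 a Haa. rewrite <- (RInt_Chasles (V:=R_CompleteNormedModule) f a a0 0); auto.
    assert (0 <= RInt f a a0) by (apply RInt_ge_0; [lra| apply Hex | intros; apply Hb; lra]).
    unfold plus; simpl; lra. }
  set (E := fun y => exists a, a <= 0 /\ y = RInt f a 0).
  destruct (completeness E) as [L [HL1 HL2]].
  { exists C. intros y [a [Ha0 ->]]. auto. }
  { exists (RInt f 0 0). exists 0. split; auto; lra. }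
  exists L. intros P [eps HP]. unfold filtermapi.
  destruct (classic (exists a, a <= 0 /\ L - eps < RInt f a 0)) as [[a0 [Ha0 Hlt]]|Hno].
  2:{ exfalso. assert (L <= L - eps); [|pose proof (cond_pos eps); lra].
      apply HL2. intros y [a [Ha' ->]]. apply Rnot_lt_le. intros Hc'. apply Hno. exists a. auto. }
  apply Filter_prod with (fun a => a < a0) (fun b => b = 0).
  - exists a0. auto.
  - reflexivity.
  - intros a b Ha1 ->. simpl. exists (RInt f a 0). split.
    + apply (RInt_correct (V:=R_CompleteNormedModule)); auto.
    + apply HP. apply ball_R.
      assert (RInt f a 0 <= L) by (apply HL1; exists a; split; auto; lra).
      assert (RInt f a0 0 <= RInt f a 0) by (apply Hmono; lra).
      apply Rabs_def1; lra.
Qed.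

Lemma ex_cmp (f : R -> R) (C : R) :
  (forall x, continuous f x) -> (forall x, Rabs (f x) <= C * exp (- Rabs x)) ->
  ex_RInt_gen f MI PI'.
Proof.
  intros Hc Hb.
  assert (HC : 0 <= C).
  { pose proof (Hb 0). pose proof (Rabs_pos (f 0)). pose proof (exp_pos (- Rabs 0)). nra. }
  apply (ex_RInt_gen_Chasles f 0).
  - set (g := fun y => C * exp y).
    assert (Hgc : forall x, continuous g x).
    { intros x. eapply continuous_ext; [|apply (cont_exp_lin C 1 x)]; intros; unfold g; simpl; f_equal; f_equal; ring. }
    assert (E1 : ex_RInt_gen (fun x => f x + g x) MI (at_point 0)).
    { apply (half_left _ (2 * C)).
      - intros x. apply (continuous_plus f g); auto.
      - intros x Hx. specialize (Hb x). rewrite (Rabs_left1 x) in Hb by lra.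
        rewrite Ropp_involutive in Hb.
        pose proof (Rabs_le_between (f x) (C * exp x)) as [HH _]. specialize (HH Hb).
        unfold g; lra. }
    assert (E2 : ex_RInt_gen g MI (at_point 0)).
    { apply (half_left _ C); auto. intros x Hx. unfold g. pose proof (exp_pos x). split; [nra|lra]. }
    destruct E1 as [l1 H1]. destruct E2 as [l2 H2]. exists (l1 - l2).
    pose proof (is_RInt_gen_minus _ _ _ _ H1 H2) as H3.
    eapply is_RInt_gen_ext; [| exact H3]. apply filter_forall. intros [a b] x _. simpl.
    unfold minus, plus, opp; simpl. ring.
  - set (g := fun y => C * exp (- y)).
    assert (Hgc : forall x, continuous g x).
    { intros x. eapply continuous_ext; [|apply (cont_exp_lin C (-1) x)]; intros; unfold g; simpl; f_equal; f_equal; ring. }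
    assert (E1 : ex_RInt_gen (fun x => f x + g x) (at_point 0) PI').
    { apply (half_right _ (2 * C)).
      - intros x. apply (continuous_plus f g); auto.
      - intros x Hx. specialize (Hb x). rewrite (Rabs_right x) in Hb by lra.
        pose proof (Rabs_le_between (f x) (C * exp (- x))) as [HH _]. specialize (HH Hb).
        unfold g; lra. }
    assert (E2 : ex_RInt_gen g (at_point 0) PI').
    { apply (half_right _ C); auto. intros x Hx. unfold g. pose proof (exp_pos (- x)). split; [nra|lra]. }
    destruct E1 as [l1 H1]. destruct E2 as [l2 H2]. exists (l1 - l2).
    pose proof (is_RInt_gen_minus _ _ _ _ H1 H2) as H3.
    eapply is_RInt_gen_ext; [| exact H3]. apply filter_forall. intros [a b] x _. simpl.
    unfold minus, plus, opp; simpl. ring.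
Qed.

Definition mom (tau t : R) (k : nat) : R := RInt_gen (fun x => x ^ k * omega tau t x) MI PI'.

Lemma cont_pow_fun (k : nat) (x : R) : continuous (fun y => y ^ k) x.
Proof. apply (ex_derive_continuous (K:=R_AbsRing) (V:=R_NormedModule)). auto_derive. auto. Qed.

Lemma cont_omega (tau t x : R) : continuous (omega tau t) x.
Proof. unfold omega. apply (ex_derive_continuous (K:=R_AbsRing) (V:=R_NormedModule)). auto_derive. auto. Qed.

Lemma cont_mono (tau t : R) (k : nat) (x : R) : continuous (fun y => y ^ k * omega tau t y) x.
Proof. apply (continuous_mult (fun y => y ^ k) (omega tau t)); [apply cont_pow_fun | apply cont_omega]. Qed.

Lemma cont_absmono (tau t : R) (k : nat) (x : R) : continuous (fun y => Rabs y ^ k * omega tau t y) x.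
Proof.
  apply (continuous_mult (fun y => Rabs y ^ k) (omega tau t)); [| apply cont_omega].
  apply (continuous_comp Rabs (fun y => y ^ k)). apply continuous_Rabs. apply cont_pow_fun.
Qed.

Lemma mom_is (tau t : R) (k : nat) : is_RInt_R (fun x => x ^ k * omega tau t x) (mom tau t k).
Proof.
  apply iR_exists. destruct (mono_bound tau t k) as [C [HC HB]].
  apply (ex_cmp _ C). apply cont_mono.
  intros x. rewrite Rabs_mult, <- RPow_abs, (Rabs_right (omega tau t x)) by (left; apply omega_pos).
  apply HB.
Qed.

Lemma absmom_ex (tau t : R) (k : nat) : exists K, is_RInt_R (fun x => Rabs x ^ k * omega tau t x) K.
Proof.
  eexists. apply iR_exists. destruct (mono_bound tau t k) as [C [HC HB]].
  apply (ex_cmp _ C). apply cont_absmono.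
  intros x. rewrite Rabs_mult, Rabs_right by (apply Rle_ge, pow_le, Rabs_pos).
  rewrite (Rabs_right (omega tau t x)) by (left; apply omega_pos). apply HB.
Qed.

Lemma exp_taylor_bound (u : R) : Rabs (exp u - 1 - u) <= u ^ 2 * exp (Rabs u).
Proof.
  pose proof (exp_ineq1_le u) as H0.
  rewrite Rabs_right by lra.
  destruct (Rle_lt_dec 0 u) as [Hu|Hu].
  - rewrite Rabs_right by lra.
    pose proof (exp_ineq1_le (- u)) as H1.
    assert (HE : exp u * exp (- u) = 1) by (rewrite <- exp_plus; replace (u + - u) with 0 by ring; apply exp_0).
    pose proof (exp_pos u). pose proof (exp_pos (- u)).
    assert (G2 : exp u - 1 <= u * exp u) by nra.
    nra.
  - rewrite Rabs_left by lra. set (v := - u).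
    pose proof (exp_ineq1_le v) as H1.
    assert (HE : exp u * exp v = 1) by (unfold v; rewrite <- exp_plus; replace (u + - u) with 0 by ring; apply exp_0).
    pose proof (exp_pos u). pose proof (exp_pos v).
    assert (Hv : 0 < v) by (unfold v; lra).
    assert (G2 : exp u * (1 + v) <= 1) by nra.
    assert (G3 : exp u <= 1 - v + v ^ 2).
    { assert ((1 - v + v^2) * (1 + v) >= 1) by nra. nra. }
    assert (G4 : 1 <= exp v) by lra.
    replace (u ^ 2) with (v ^ 2) by (unfold v; ring).
    assert (0 <= v^2) by nra.
    unfold v in *. nra.
Qed.

Lemma omega_shift (tau t h x : R) : omega tau (t + h) x = omega tau t x * exp (h * x ^ 2).
Proof. unfold omega. rewrite <- exp_plus. f_equal. ring. Qed.

Lemma mom_pt_bound (tau t h : R) (k : nat) (x : R) : Rabs h <= 1 ->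
  Rabs (x ^ k * omega tau (t + h) x - x ^ k * omega tau t x - h * (x ^ (k + 2) * omega tau t x))
  <= h ^ 2 * (Rabs x ^ (k + 4) * omega tau (t + 1) x).
Proof.
  intros Hh.
  rewrite omega_shift, (omega_shift tau t 1).
  replace (x ^ k * (omega tau t x * exp (h * x ^ 2)) - x ^ k * omega tau t x - h * (x ^ (k + 2) * omega tau t x))
    with (x ^ k * omega tau t x * (exp (h * x ^ 2) - 1 - h * x ^ 2)) by (rewrite pow_add; ring).
  rewrite Rabs_mult. pose proof (exp_taylor_bound (h * x ^ 2)) as HT.
  rewrite Rabs_mult, <- RPow_abs, (Rabs_right (omega tau t x)) by (left; apply omega_pos).
  assert (Hw : 0 < omega tau t x) by apply omega_pos.
  assert (Hxk : 0 <= Rabs x ^ k) by (apply pow_le, Rabs_pos).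
  assert (HE : exp (Rabs (h * x ^ 2)) <= exp (1 * x ^ 2)).
  { rewrite Rabs_mult, (Rabs_right (x^2)) by (apply Rle_ge, pow2_ge_0).
    destruct (Rle_lt_or_eq_dec _ _ (Rmult_le_compat_r (x^2) _ _ (pow2_ge_0 x) Hh)) as [Hl|He].
    - left; apply exp_increasing; exact Hl.
    - rewrite He; right; reflexivity. }
  assert (Hsq : (h * x ^ 2) ^ 2 * exp (Rabs (h * x ^ 2)) <= h ^ 2 * x ^ 4 * exp (1 * x ^ 2)).
  { replace ((h * x ^ 2) ^ 2) with (h ^ 2 * x ^ 4) by ring.
    apply Rmult_le_compat_l; [|exact HE]. apply Rmult_le_pos; [apply pow2_ge_0|].
    replace (x^4) with ((x^2)^2) by ring. apply pow2_ge_0. }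
  replace (Rabs x ^ (k + 4)) with (Rabs x ^ k * x ^ 4).
  2:{ rewrite pow_add. f_equal. rewrite RPow_abs. symmetry. apply Rabs_right.
      replace (x^4) with ((x^2)^2) by ring. apply Rle_ge, pow2_ge_0. }
  apply Rle_trans with (Rabs x ^ k * omega tau t x * ((h * x ^ 2) ^ 2 * exp (Rabs (h * x ^ 2)))).
  { apply Rmult_le_compat_l; [apply Rmult_le_pos; lra | exact HT]. }
  apply Rle_trans with (Rabs x ^ k * omega tau t x * (h ^ 2 * x ^ 4 * exp (1 * x ^ 2))).
  { apply Rmult_le_compat_l; [apply Rmult_le_pos; lra | exact Hsq]. }
  right; ring.
Qed.

Lemma filter_le_MI_PI : filter_prod MI PI' (fun ab : R * R => fst ab <= snd ab).
Proof.
  apply Filter_prod with (fun a => a < 0) (fun b => 0 < b).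
  - exists 0; auto.
  - exists 0; auto.
  - intros a b Ha Hb; simpl; lra.
Qed.

Lemma mom_deriv (tau t : R) (k : nat) : is_derive (fun s => mom tau s k) t (mom tau t (k + 2)).
Proof.
  apply is_derive_Reals.
  destruct (absmom_ex tau (t + 1) (k + 4)) as [K HK].
  assert (HK0 : 0 <= K).
  { assert (Hn := RInt_gen_norm (V:=R_CompleteNormedModule) (fun x => 0) (fun x => Rabs x ^ (k + 4) * omega tau (t + 1) x) 0 K filter_le_MI_PI).
    assert (Hz : is_RInt_R (fun _ => 0) 0).
    { pose proof (iR_scal _ 0 _ (mom_is tau t 0)) as Hz. rewrite Rmult_0_l in Hz.
      eapply iR_ext; [|exact Hz]. intros; simpl; ring. }
    assert (Hp : filter_prod MI PI' (fun ab : R * R => forall x, fst ab <= x <= snd ab ->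
       norm ((fun _ : R => 0) x) <= Rabs x ^ (k + 4) * omega tau (t + 1) x)).
    { apply filter_forall. intros ab x _. change (Rabs 0 <= Rabs x ^ (k + 4) * omega tau (t + 1) x).
      rewrite Rabs_R0. apply Rmult_le_pos; [apply pow_le, Rabs_pos | left; apply omega_pos]. }
    specialize (Hn Hp Hz HK). change (Rabs 0 <= K) in Hn. rewrite Rabs_R0 in Hn. exact Hn. }
  intros eps Heps.
  assert (Hd : 0 < Rmin 1 (eps / (K + 1))) by (apply Rmin_pos; [lra| apply Rdiv_lt_0_compat; lra]).
  exists (mkposreal _ Hd). intros h Hh0 Hh. simpl in Hh.
  assert (Hh1 : Rabs h <= 1) by (pose proof (Rmin_l 1 (eps / (K + 1))); lra).
  assert (Hh2 : Rabs h < eps / (K + 1)) by (pose proof (Rmin_r 1 (eps / (K + 1))); lra).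
  set (D := mom tau (t + h) k - mom tau t k - h * mom tau t (k + 2)).
  assert (HD : is_RInt_R (fun x => x ^ k * omega tau (t + h) x - x ^ k * omega tau t x - h * (x ^ (k + 2) * omega tau t x)) D).
  { apply iR_minus; [apply iR_minus|apply iR_scal]; apply mom_is. }
  assert (HDb : Rabs D <= h ^ 2 * K).
  { apply (RInt_gen_norm (V:=R_CompleteNormedModule) (fun x => x ^ k * omega tau (t + h) x - x ^ k * omega tau t x - h * (x ^ (k + 2) * omega tau t x)) (fun x => h ^ 2 * (Rabs x ^ (k + 4) * omega tau (t + 1) x)) D (h^2 * K) filter_le_MI_PI).
    - apply filter_forall. intros ab x _. apply mom_pt_bound; auto.
    - exact HD.
    - apply iR_scal; exact HK. }
  replace ((mom tau (t + h) k - mom tau t k) / h - mom tau t (k + 2)) with (D / h) by (unfold D; field; auto).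
  unfold Rdiv. rewrite Rabs_mult, Rabs_inv.
  assert (Hah : 0 < Rabs h) by (apply Rabs_pos_lt; auto).
  apply Rle_lt_trans with (Rabs h * K).
  { apply Rmult_le_reg_r with (Rabs h); auto. rewrite Rmult_assoc, Rinv_l by lra.
    replace (Rabs h * K * Rabs h) with (h ^ 2 * K). lra.
    rewrite <- (pow2_abs h). ring. }
  apply Rle_lt_trans with (eps / (K + 1) * K).
  { apply Rmult_le_compat_r; lra. }
  apply Rmult_lt_reg_r with (K + 1); [lra|]. field_simplify; [nra | lra].
Qed.

Lemma iR_zero (tau t : R) : is_RInt_R (fun _ => 0) 0.
Proof.
  pose proof (iR_scal _ 0 _ (mom_is tau t 0)) as Hz. rewrite Rmult_0_l in Hz.
  eapply iR_ext; [|exact Hz]. intros; simpl; ring.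
Qed.

Fixpoint Isum1 (tau : R) (e : nat -> R) (d : nat) (k : nat) (t : R) : R :=
  match d with O => 0 | S d' => Isum1 tau e d' k t + e d' * mom tau t (k + d') end.

Fixpoint Ipair (tau : R) (c : nat -> R) (d1 : nat) (e : nat -> R) (d2 : nat) (m : nat) (t : R) : R :=
  match d1 with O => 0 | S d' => Ipair tau c d' e d2 m t + c d' * Isum1 tau e d2 (d' + m) t end.

Lemma Isum1_is (tau t : R) (e : nat -> R) (d k : nat) :
  is_RInt_R (fun x => x ^ k * psum e d x * omega tau t x) (Isum1 tau e d k t).
Proof.
  induction d as [|d IH]; simpl.
  - eapply iR_ext; [|apply (iR_zero tau t)]. intros; simpl; ring.
  - eapply iR_ext; [| apply (iR_plus _ _ _ _ IH (iR_scal _ (e d) _ (mom_is tau t (k + d))))].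
    intros x. simpl. rewrite pow_add. ring.
Qed.

Lemma Ipair_is (tau t : R) (c e : nat -> R) (d1 d2 m : nat) :
  is_RInt_R (fun x => psum c d1 x * psum e d2 x * x ^ m * omega tau t x) (Ipair tau c d1 e d2 m t).
Proof.
  induction d1 as [|d IH]; simpl.
  - eapply iR_ext; [|apply (iR_zero tau t)]. intros; simpl; ring.
  - eapply iR_ext; [| apply (iR_plus _ _ _ _ IH (iR_scal _ (c d) _ (Isum1_is tau t e d2 (d + m))))].
    intros x. simpl. rewrite pow_add. ring.
Qed.

Lemma Isum1_der (tau t : R) (e : R -> nat -> R) (e' : nat -> R) (d k : nat) :
  (forall j, is_derive (fun s => e s j) t (e' j)) ->
  is_derive (fun s => Isum1 tau (e s) d k s) t (Isum1 tau e' d k t + Isum1 tau (e t) d (k + 2) t).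
Proof.
  intros He. induction d as [|d IH]; simpl.
  - eapply D_ext_val; [apply D_const|]. ring.
  - eapply D_ext_val; [apply D_plus; [exact IH| apply D_mult; [apply He | apply mom_deriv]]|].
    replace (k + 2 + d)%nat with (k + d + 2)%nat by lia. ring.
Qed.

Lemma Ipair_der (tau t : R) (c e : R -> nat -> R) (c' e' : nat -> R) (d1 d2 m : nat) :
  (forall j, is_derive (fun s => c s j) t (c' j)) ->
  (forall j, is_derive (fun s => e s j) t (e' j)) ->
  is_derive (fun s => Ipair tau (c s) d1 (e s) d2 m s) t
    (Ipair tau c' d1 (e t) d2 m t + Ipair tau (c t) d1 e' d2 m t + Ipair tau (c t) d1 (e t) d2 (m + 2) t).
Proof.
  intros Hc He. induction d1 as [|d IH]; simpl.
  - eapply D_ext_val; [apply D_const|]. ring.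
  - eapply D_ext_val; [apply D_plus; [exact IH| apply D_mult; [apply Hc | apply (Isum1_der tau t e e' d2 (d + m) He)]]|].
    replace (d + (m + 2))%nat with (d + m + 2)%nat by lia. ring.
Qed.

Lemma psum_lin (c e : nat -> R) (a : R) (d : nat) (x : R) :
  psum (fun j => c j - a * e j) d x = psum c d x - a * psum e d x.
Proof. induction d; simpl; [ring|rewrite IHd; ring]. Qed.

Definition shiftc (c : nat -> R) (j : nat) : R := match j with O => 0 | S j' => c j' end.

Lemma psum_shift (c : nat -> R) (d : nat) (x : R) : psum (shiftc c) (S d) x = x * psum c d x.
Proof. induction d; simpl in *; [ring| rewrite IHd; ring]. Qed.

Lemma psum_zero_ext (c : nat -> R) (d m : nat) (x : R) :
  (forall j, (d <= j)%nat -> c j = 0) -> psum c (m + d) x = psum c d x.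
Proof.
  intros H. induction m; simpl; auto. rewrite IHm, H by lia. ring.
Qed.

Lemma psum_ext (c e : nat -> R) (d : nat) (x : R) : (forall j, (j < d)%nat -> c j = e j) -> psum c d x = psum e d x.
Proof. induction d; intros H; simpl; auto. rewrite IHd by (intros; apply H; lia). rewrite H by lia. reflexivity. Qed.

Definition dcoef (c : nat -> R) (j : nat) : R := INR (S j) * c (S j).

Lemma psum_deriv (c : nat -> R) (d : nat) (x : R) : is_derive (fun y => psum c d y) x (psum (dcoef c) (pred d) x).
Proof.
  induction d as [|d IH].
  - cbn [psum pred]. apply D_const.
  - cbn [psum]. eapply D_ext_val; [apply D_plus; [exact IH| apply is_derive_scal; apply (is_derive_pow (fun y => y) d x 1); apply (is_derive_id x)]|].
    destruct d as [|d].
    + cbn [pred psum INR]. ring.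
    + cbn [pred psum]. unfold dcoef. ring.
Qed.

Lemma psum_cont (c : nat -> R) (d : nat) (x : R) : continuous (psum c d) x.
Proof. apply (ex_derive_continuous (K:=R_AbsRing) (V:=R_NormedModule)). eexists. apply psum_deriv. Qed.

Lemma psum_abs_le (c : nat -> R) (d : nat) (x : R) (A : R) :
  True -> Rabs (psum c (S d) x) <= Rabs (psum c d x) + Rabs (c d) * Rabs x ^ d.
Proof. intros _. cbn [psum]. rewrite RPow_abs, <- Rabs_mult. apply Rabs_triang. Qed.

Lemma mono_psum_bound (tau t : R) (i : nat) (e : nat -> R) (d : nat) : exists C, forall x,
  Rabs x ^ i * Rabs (psum e d x) * omega tau t x <= C * exp (- Rabs x).
Proof.
  induction d as [|d [C HC]].
  - exists 0. intros x. simpl. rewrite Rabs_R0. right; ring.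
  - destruct (mono_bound tau t (i + d)) as [C2 [HC2 HB2]].
    exists (C + Rabs (e d) * C2). intros x.
    pose proof (psum_abs_le e d x 0 I) as Ht.
    assert (Hi : 0 <= Rabs x ^ i) by (apply pow_le, Rabs_pos).
    assert (Hw : 0 < omega tau t x) by apply omega_pos.
    apply Rle_trans with (Rabs x ^ i * (Rabs (psum e d x) + Rabs (e d) * Rabs x ^ d) * omega tau t x).
    { apply Rmult_le_compat_r; [lra|]. apply Rmult_le_compat_l; auto. }
    specialize (HC x). specialize (HB2 x). rewrite pow_add in HB2.
    pose proof (Rabs_pos (e d)).
    replace (Rabs x ^ i * (Rabs (psum e d x) + Rabs (e d) * Rabs x ^ d) * omega tau t x)
      with (Rabs x ^ i * Rabs (psum e d x) * omega tau t x + Rabs (e d) * (Rabs x ^ i * Rabs x ^ d * omega tau t x)) by ring.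
    pose proof (Rmult_le_compat_l _ _ _ H HB2). nra.
Qed.

Lemma psum2_bound (tau t : R) (c : nat -> R) (d1 : nat) (e : nat -> R) (d2 : nat) : exists C, forall x,
  Rabs (psum c d1 x) * Rabs (psum e d2 x) * omega tau t x <= C * exp (- Rabs x).
Proof.
  induction d1 as [|d [C HC]].
  - exists 0. intros x. simpl. rewrite Rabs_R0. right; ring.
  - destruct (mono_psum_bound tau t d e d2) as [C2 HC2].
    exists (C + Rabs (c d) * C2). intros x.
    pose proof (psum_abs_le c d x 0 I) as Ht.
    assert (Hq : 0 <= Rabs (psum e d2 x)) by apply Rabs_pos.
    assert (Hw : 0 < omega tau t x) by apply omega_pos.
    apply Rle_trans with ((Rabs (psum c d x) + Rabs (c d) * Rabs x ^ d) * Rabs (psum e d2 x) * omega tau t x).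
    { apply Rmult_le_compat_r; [lra|]. apply Rmult_le_compat_r; auto. }
    specialize (HC x). specialize (HC2 x).
    pose proof (Rabs_pos (c d)).
    replace ((Rabs (psum c d x) + Rabs (c d) * Rabs x ^ d) * Rabs (psum e d2 x) * omega tau t x)
      with (Rabs (psum c d x) * Rabs (psum e d2 x) * omega tau t x + Rabs (c d) * (Rabs x ^ d * Rabs (psum e d2 x) * omega tau t x)) by ring.
    pose proof (Rmult_le_compat_l _ _ _ H HC2). nra.
Qed.

Lemma small_exp_tail (C eps : R) : 0 < eps -> exists M, forall x, M < Rabs x -> Rabs C * exp (- Rabs x) < eps.
Proof.
  intros He. set (q := eps / (Rabs C + 1)).
  assert (Hq : 0 < q) by (unfold q; apply Rdiv_lt_0_compat; [lra| pose proof (Rabs_pos C); lra]).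
  exists (Rabs (ln q)). intros x Hx.
  assert (H1 : - Rabs x < ln q) by (pose proof (Rle_abs (- ln q)); rewrite Rabs_Ropp in H; lra).
  apply exp_increasing in H1. rewrite exp_ln in H1 by auto.
  pose proof (Rabs_pos C).
  apply Rle_lt_trans with ((Rabs C + 1) * exp (- Rabs x)).
  { pose proof (exp_pos (- Rabs x)). nra. }
  replace eps with ((Rabs C + 1) * q) by (unfold q; field; lra).
  apply Rmult_lt_compat_l; lra.
Qed.

Lemma lim_bound (F : R -> R) (C : R) : (forall x, Rabs (F x) <= C * exp (- Rabs x)) ->
  filterlim F PI' (locally 0) /\ filterlim F MI (locally 0).
Proof.
  intros HF.
  assert (Hmain : forall eps, 0 < eps -> exists M, forall x, M < Rabs x -> Rabs (F x - 0) < eps).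
  { intros eps He. destruct (small_exp_tail C eps He) as [M HM]. exists M. intros x Hx.
    rewrite Rminus_0_r. eapply Rle_lt_trans; [apply HF|].
    eapply Rle_lt_trans; [|apply (HM x Hx)]. apply Rmult_le_compat_r; [left; apply exp_pos| apply Rle_abs]. }
  split; intros P [eps HP]; destruct (Hmain eps (cond_pos eps)) as [M HM].
  - exists (Rabs M). intros x Hx. apply HP. apply ball_R. apply HM.
    pose proof (Rle_abs M). pose proof (Rle_abs x). lra.
  - exists (- Rabs M). intros x Hx. apply HP. apply ball_R. apply HM.
    pose proof (Rle_abs M). rewrite Rabs_left by (pose proof (Rabs_pos M); lra). lra.
Qed.

Lemma omega_deriv (tau t x : R) :
  is_derive (omega tau t) x (omega tau t x * (- 6 * x ^ 5 + 4 * tau * x ^ 3 + 2 * t * x)).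
Proof. unfold omega. auto_derive; auto. match goal with |- _ * exp ?B = exp ?B2 * _ => replace B with B2 by ring end. ring. Qed.

Definition Vp (tau t x : R) : R := - 6 * x ^ 5 + 4 * tau * x ^ 3 + 2 * t * x.

Lemma ibp (tau t : R) (c : nat -> R) (d1 : nat) (e : nat -> R) (d2 : nat) :
  Ipair tau (dcoef c) (pred d1) e d2 0 t + Ipair tau c d1 (dcoef e) (pred d2) 0 t
  = 6 * Ipair tau c d1 e d2 5 t - 4 * tau * Ipair tau c d1 e d2 3 t - 2 * t * Ipair tau c d1 e d2 1 t.
Proof.
  set (F := fun x => psum c d1 x * psum e d2 x * omega tau t x).
  set (DF := fun x => (psum (dcoef c) (pred d1) x * psum e d2 x + psum c d1 x * psum (dcoef e) (pred d2) x
                       + psum c d1 x * psum e d2 x * Vp tau t x) * omega tau t x).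
  assert (HD : forall x, is_derive F x (DF x)).
  { intros x. unfold F, DF. eapply D_ext_val.
    - apply D_mult; [apply D_mult; apply psum_deriv | apply omega_deriv].
    - unfold Vp. ring. }
  assert (HDu : forall x, Derive F x = DF x) by (intros; apply is_derive_unique; auto).
  destruct (psum2_bound tau t c d1 e d2) as [C HC].
  assert (HFb : forall x, Rabs (F x) <= C * exp (- Rabs x)).
  { intros x. unfold F. rewrite !Rabs_mult, (Rabs_right (omega tau t x)) by (left; apply omega_pos). apply HC. }
  destruct (lim_bound F C HFb) as [Lp Lm].
  assert (H0 : is_RInt_R (Derive F) (0 - 0)).
  { apply (is_RInt_gen_Derive F 0 0).
    - apply filter_forall. intros ab x _. eexists; apply HD.
    - apply filter_forall. intros ab x _. eapply continuous_ext; [intros; symmetry; apply HDu|].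
      unfold DF. apply (continuous_mult (fun y => _) (omega tau t)); [| apply cont_omega].
      unfold Vp. apply (ex_derive_continuous (K:=R_AbsRing) (V:=R_NormedModule)).
      auto_derive. repeat split; eexists; apply psum_deriv.
    - exact Lm.
    - exact Lp. }
  assert (H1 : is_RInt_R DF 0).
  { eapply iR_ext; [exact HDu|]. replace 0 with (0 - 0) by ring. exact H0. }
  assert (H2 : is_RInt_R DF (Ipair tau (dcoef c) (pred d1) e d2 0 t + Ipair tau c d1 (dcoef e) (pred d2) 0 t
     - (6 * Ipair tau c d1 e d2 5 t - 4 * tau * Ipair tau c d1 e d2 3 t - 2 * t * Ipair tau c d1 e d2 1 t))).
  { eapply iR_ext; [| apply iR_minus; [apply iR_plus; apply Ipair_is |
         apply iR_minus; [apply iR_minus|]; apply iR_scal; apply Ipair_is]].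
    intros x. unfold DF, Vp. simpl. ring. }
  pose proof (iR_unique _ _ _ H1 H2). lra.
Qed.

Lemma pos_int (f : R -> R) (x0 l : R) :
  (forall x, continuous f x) -> (forall x, 0 <= f x) -> 0 < f x0 -> is_RInt_R f l -> 0 < l.
Proof.
  intros Hc Hp Hx0 Hl.
  assert (Hloc : locally x0 (fun y => f x0 / 2 < f y)).
  { apply (Hc x0 (fun z => f x0 / 2 < z)).
    assert (Hpos : 0 < f x0 / 2) by lra.
    exists (mkposreal _ Hpos). intros y Hy. change (Rabs (y - f x0) < f x0 / 2) in Hy.
    apply Rabs_def2 in Hy. lra. }
  destruct Hloc as [d Hd].
  assert (Hdp : 0 < d) by apply cond_pos.
  set (a0 := x0 - d / 2). set (b0 := x0 + d / 2).
  assert (Hex : forall a b, ex_RInt f a b) by (intros; apply (ex_RInt_continuous (V:=R_CompleteNormedModule)); intros; apply Hc).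
  assert (Hc0 : d / 2 * f x0 <= RInt f a0 b0).
  { apply Rle_trans with (RInt (fun _ => f x0 / 2) a0 b0).
    - rewrite RInt_const. unfold a0, b0, scal; simpl; unfold mult; simpl. right; field.
    - apply RInt_le; [unfold a0, b0; lra | apply (ex_RInt_const (V:=R_CompleteNormedModule)) | apply Hex |].
      intros x Hx. left. apply Hd. change (Rabs (x - x0) < d). unfold a0, b0 in Hx. apply Rabs_def1; lra. }
  assert (Hc1 : 0 < d / 2 * f x0) by (apply Rmult_lt_0_compat; lra).
  set (c := RInt f a0 b0) in *.
  assert (Hbig : forall a b, a <= a0 -> b0 <= b -> c <= RInt f a b).
  { intros a b Ha Hb.
    rewrite <- (RInt_Chasles (V:=R_CompleteNormedModule) f a a0 b) by auto.
    rewrite <- (RInt_Chasles (V:=R_CompleteNormedModule) f a0 b0 b) by auto.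
    assert (0 <= RInt f a a0) by (apply RInt_ge_0; auto).
    assert (0 <= RInt f b0 b) by (apply RInt_ge_0; auto).
    unfold plus; simpl. fold c. lra. }
  destruct (Rlt_or_le l c) as [Hlc|Hcl]; [|lra].
  exfalso.
  assert (Hp' : 0 < c - l) by lra.
  specialize (Hl (ball l (mkposreal _ Hp'))).
  assert (Hball : locally l (ball l (mkposreal _ Hp'))) by (exists (mkposreal _ Hp'); auto).
  specialize (Hl Hball). unfold filtermapi in Hl.
  assert (Hab : filter_prod MI PI' (fun ab : R * R => fst ab < a0 /\ b0 < snd ab)).
  { apply Filter_prod with (fun a => a < a0) (fun b => b0 < b); [exists a0; auto| exists b0; auto| simpl; auto]. }
  pose proof (filter_and _ _ Hl Hab) as Hboth.
  destruct (Hierarchy.filter_ex _ Hboth) as [[a b] [[y [Hy1 Hy2]] [Ha Hb]]].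
  simpl in *. apply (is_RInt_unique (V:=R_CompleteNormedModule)) in Hy1.
  change (Rabs (y - l) < c - l) in Hy2. apply Rabs_def2 in Hy2.
  pose proof (Hbig a b ltac:(lra) ltac:(lra)). lra.
Qed.

Fixpoint sabs (c : nat -> R) (d : nat) : R := match d with O => 0 | S d' => sabs c d' + Rabs (c d') end.

Lemma sabs_pos c d : 0 <= sabs c d.
Proof. induction d; simpl; [lra| pose proof (Rabs_pos (c d)); lra]. Qed.

Lemma psum_growth (c : nat -> R) (d : nat) (x : R) : 1 <= x -> x * Rabs (psum c d x) <= sabs c d * x ^ d.
Proof.
  intros Hx. induction d as [|d IH]; simpl.
  - rewrite Rabs_R0. lra.
  - apply Rle_trans with (x * (Rabs (psum c d x) + Rabs (c d) * x ^ d)).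
    { apply Rmult_le_compat_l; [lra|]. rewrite <- (Rabs_right (x ^ d)) at 2 by (apply Rle_ge, pow_le; lra).
      rewrite <- Rabs_mult. apply Rabs_triang. }
    assert (Hxd : x ^ d <= x * x ^ d) by (assert (0 <= x^d) by (apply pow_le; lra); nra).
    pose proof (sabs_pos c d). pose proof (Rabs_pos (c d)).
    assert (0 <= x ^ d) by (apply pow_le; lra).
    assert (sabs c d * x ^ d <= sabs c d * (x * x ^ d)) by (apply Rmult_le_compat_l; lra).
    nra.
Qed.

Lemma monic_nonzero (c : nat -> R) (k : nat) : exists x, x ^ k + psum c k x <> 0.
Proof.
  set (X := 1 + sabs c k). exists X.
  assert (HX : 1 <= X) by (unfold X; pose proof (sabs_pos c k); lra).
  pose proof (psum_growth c k X HX) as HG.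
  assert (HXk : 0 < X ^ k) by (apply pow_lt; lra).
  assert (Hlt : Rabs (psum c k X) < X ^ k).
  { apply Rmult_lt_reg_l with X; [lra|].
    eapply Rle_lt_trans; [exact HG|]. apply Rmult_lt_compat_r; [auto| unfold X; lra]. }
  intros Heq. assert (psum c k X = - X ^ k) by lra. rewrite H, Rabs_Ropp, Rabs_right in Hlt by lra. lra.
Qed.

Definition Hyps (tau : R) (P : R -> nat -> R -> R) (beta : R -> nat -> R) : Prop :=
  (forall t n, monic_poly_fun n (P t n)) /\
  (forall t m n, m <> n -> is_RInt_R (fun x => P t m x * P t n x * omega tau t x) 0) /\
  (forall t, beta t 0%nat = 0) /\
  (forall t x, P t 1%nat x = x * P t 0%nat x) /\
  (forall t n x, (1 <= n)%nat -> P t (S n) x = x * P t n x - beta t n * P t (n - 1)%nat x).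

Definition e0 (j : nat) : R := if Nat.eqb j 0 then 1 else 0.

Fixpoint Pc2 (beta : R -> nat -> R) (t : R) (k : nat) : (nat -> R) * (nat -> R) :=
  match k with
  | O => (e0, e0)
  | S k' => let p := Pc2 beta t k' in (fun j => shiftc (fst p) j - beta t k' * snd p j, fst p)
  end.

Definition Pc beta t k := fst (Pc2 beta t k).

Lemma Pc_snd beta t k : snd (Pc2 beta t k) = Pc beta t (k - 1).
Proof. destruct k; simpl; [reflexivity|]. rewrite Nat.sub_0_r. reflexivity. Qed.

Lemma Pc_S beta t k j : Pc beta t (S k) j = shiftc (Pc beta t k) j - beta t k * Pc beta t (k - 1) j.
Proof. unfold Pc at 1. simpl. rewrite Pc_snd. reflexivity. Qed.

Lemma Pc_0 beta t j : Pc beta t 0 j = e0 j.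
Proof. reflexivity. Qed.

Lemma Pc_high beta t k : forall j, (k < j)%nat -> Pc beta t k j = 0.
Proof.
  induction k as [k IH] using (well_founded_induction lt_wf). intros j Hj.
  destruct k as [|k].
  - rewrite Pc_0. unfold e0. destruct j; [lia| reflexivity].
  - rewrite Pc_S. destruct j as [|j]; [lia|]. simpl.
    rewrite (IH k) by lia. rewrite (IH (k - 1)%nat) by lia. ring.
Qed.

Lemma Pc_top beta t k : Pc beta t k k = 1.
Proof.
  induction k as [|k IH].
  - reflexivity.
  - rewrite Pc_S. simpl. rewrite IH, Pc_high by lia. ring.
Qed.

Lemma P_rec tau P beta (H : Hyps tau P beta) t k x :
  P t (S k) x = x * P t k x - beta t k * P t (k - 1)%nat x.
Proof.
  destruct H as [_ [_ [Hb0 [Hr0 Hr]]]]. destruct k as [|k].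
  - rewrite Hr0, Hb0. simpl. ring.
  - apply Hr. lia.
Qed.

Lemma P_rep tau P beta (H : Hyps tau P beta) t k x : P t k x = psum (Pc beta t k) (S k) x.
Proof.
  revert x. induction k as [k IH] using (well_founded_induction lt_wf). intros x.
  destruct k as [|k].
  - destruct H as [Hm _]. destruct (Hm t 0%nat) as [c Hc]. rewrite Hc. simpl.
    rewrite Pc_0. unfold e0. simpl. ring.
  - rewrite (P_rec tau P beta H), (IH k) by lia. rewrite (IH (k - 1)%nat) by lia.
    rewrite (psum_ext (Pc beta t (S k)) (fun j => shiftc (Pc beta t k) j - beta t k * Pc beta t (k - 1) j)) by (intros; apply Pc_S).
    rewrite psum_lin, psum_shift.
    replace (S (S k)) with ((S (S k) - S (k - 1)) + S (k - 1))%nat by lia.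
    rewrite psum_zero_ext. reflexivity.
    intros j Hj. apply Pc_high. lia.
Qed.

Definition ip tau beta t i j m := Ipair tau (Pc beta t i) (S i) (Pc beta t j) (S j) m t.
Definition hh tau beta t k := ip tau beta t k k 0.

Lemma ip_is tau P beta (H : Hyps tau P beta) t i j m :
  is_RInt_R (fun x => P t i x * P t j x * x ^ m * omega tau t x) (ip tau beta t i j m).
Proof.
  eapply iR_ext; [| apply Ipair_is]. intros x. simpl. rewrite !(P_rep tau P beta H). reflexivity.
Qed.

Lemma ip_orth tau P beta (H : Hyps tau P beta) t i j : i <> j -> ip tau beta t i j 0 = 0.
Proof.
  intros Hij. pose proof (ip_is tau P beta H t i j 0) as H1.
  destruct H as [_ [Ho _]]. pose proof (Ho t i j Hij) as H2.
  eapply iR_unique; [exact H1|]. eapply iR_ext; [|exact H2]. intros; simpl; ring.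
Qed.

Lemma Ipair_sym tau t c d1 e d2 m : Ipair tau c d1 e d2 m t = Ipair tau e d2 c d1 m t.
Proof.
  eapply iR_unique; [apply Ipair_is|]. eapply iR_ext; [|apply Ipair_is]. intros; simpl; ring.
Qed.

Lemma ip_sym tau beta t i j m : ip tau beta t i j m = ip tau beta t j i m.
Proof. unfold ip. apply Ipair_sym. Qed.

Lemma ip_rec tau P beta (H : Hyps tau P beta) t i j m :
  ip tau beta t i j (S m) = ip tau beta t (S i) j m + beta t i * ip tau beta t (i - 1) j m.
Proof.
  eapply iR_unique; [apply (ip_is tau P beta H)|].
  eapply iR_ext; [| apply iR_plus; [apply (ip_is tau P beta H)| apply iR_scal; apply (ip_is tau P beta H)]].
  intros x. cbv beta. rewrite (P_rec tau P beta H). simpl. ring.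
Qed.

Fixpoint W (b : Z -> R) (m : nat) (i j : Z) : R :=
  match m with
  | O => if Z.eqb i j then 1 else 0
  | S m' => W b m' (i + 1)%Z j + b i * W b m' (i - 1)%Z j
  end.

Lemma W_S (b : Z -> R) m i j : W b (S m) i j = W b m (i + 1)%Z j + b i * W b m (i - 1)%Z j.
Proof. reflexivity. Qed.

Definition bZ (beta : R -> nat -> R) (t : R) (i : Z) : R := beta t (Z.to_nat i).

Lemma ip_W tau P beta (H : Hyps tau P beta) t m : forall i j,
  ip tau beta t i j m = W (bZ beta t) m (Z.of_nat i) (Z.of_nat j) * hh tau beta t j.
Proof.
  induction m as [|m IH]; intros i j.
  - simpl. destruct (Nat.eq_dec i j) as [->|Hij].
    + rewrite Z.eqb_refl. unfold hh. ring.
    + rewrite (ip_orth tau P beta H) by auto. replace (Z.eqb (Z.of_nat i) (Z.of_nat j)) with false.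
      ring. symmetry. apply Z.eqb_neq. lia.
  - rewrite (ip_rec tau P beta H), !IH, W_S.
    replace (Z.of_nat (S i)) with (Z.of_nat i + 1)%Z by lia.
    replace (bZ beta t (Z.of_nat i)) with (beta t i) by (unfold bZ; rewrite Nat2Z.id; reflexivity).
    destruct i as [|i].
    + destruct H as [_ [_ [Hb0 _]]]. rewrite Hb0. ring.
    + replace (Z.of_nat (S i - 1)) with (Z.of_nat (S i) - 1)%Z by lia. ring.
Qed.

Lemma W_shift (b : Z -> R) (z : Z) m : forall i j,
  W b m (z + i)%Z (z + j)%Z = W (fun o => b (z + o)%Z) m i j.
Proof.
  induction m as [|m IH]; intros i j; simpl.
  - destruct (Z.eqb_spec (z + i) (z + j)); destruct (Z.eqb_spec i j); auto; lia.
  - replace (z + i + 1)%Z with (z + (i + 1))%Z by lia.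
    replace (z + i - 1)%Z with (z + (i - 1))%Z by lia.
    rewrite !IH. reflexivity.
Qed.

Lemma Isum1_P tau P beta (H : Hyps tau P beta) t d k :
  Isum1 tau (Pc beta t k) (S k) d t = ip tau beta t d k 0 - Ipair tau (Pc beta t d) d (Pc beta t k) (S k) 0 t.
Proof.
  eapply iR_unique; [apply Isum1_is|].
  eapply iR_ext; [| apply iR_minus; [apply Ipair_is | apply Ipair_is]].
  intros x. simpl. rewrite Pc_top. ring.
Qed.

Lemma orth_low tau P beta (H : Hyps tau P beta) t k : forall d c, (d <= k)%nat ->
  Ipair tau c d (Pc beta t k) (S k) 0 t = 0.
Proof.
  induction d as [|d IH]; intros c Hd; [reflexivity|]. change (Ipair tau c (S d) (Pc beta t k) (S k) 0 t) with
    (Ipair tau c d (Pc beta t k) (S k) 0 t + c d * Isum1 tau (Pc beta t k) (S k) (d + 0) t).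
  rewrite IH by lia. rewrite Nat.add_0_r, (Isum1_P tau P beta H), IH by lia.
  rewrite (ip_orth tau P beta H) by lia. ring.
Qed.

Lemma hh_pos tau P beta (H : Hyps tau P beta) t k : 0 < hh tau beta t k.
Proof.
  destruct (monic_nonzero (Pc beta t k) k) as [x0 Hx0].
  apply (pos_int (fun x => psum (Pc beta t k) (S k) x * psum (Pc beta t k) (S k) x * x ^ 0 * omega tau t x) x0).
  - intros x. apply (continuous_mult (fun y => psum (Pc beta t k) (S k) y * psum (Pc beta t k) (S k) y * y ^ 0) (omega tau t)); [| apply cont_omega].
    apply (continuous_mult (fun y => psum (Pc beta t k) (S k) y * psum (Pc beta t k) (S k) y) (fun y => y ^ 0)); [| apply cont_pow_fun].
    apply (continuous_mult (psum (Pc beta t k) (S k)) (psum (Pc beta t k) (S k))); apply psum_cont.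
  - intros x. simpl. pose proof (omega_pos tau t x). pose proof (pow2_ge_0 (psum (Pc beta t k) (S k) x)). simpl in H1. nra.
  - simpl. rewrite Pc_top. pose proof (omega_pos tau t x0).
    assert (0 < (x0 ^ k + psum (Pc beta t k) k x0) ^ 2) by (replace ((x0 ^ k + psum (Pc beta t k) k x0) ^ 2) with (Rsqr (x0 ^ k + psum (Pc beta t k) k x0)) by (unfold Rsqr; ring); apply Rlt_0_sqr; exact Hx0).
    replace ((psum (Pc beta t k) k x0 + 1 * x0 ^ k) * (psum (Pc beta t k) k x0 + 1 * x0 ^ k) * 1 * omega tau t x0)
      with ((x0 ^ k + psum (Pc beta t k) k x0) ^ 2 * omega tau t x0) by ring.
    apply Rmult_lt_0_compat; auto.
  - apply Ipair_is.
Qed.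

Definition Dk (beta : R -> nat -> R) (k : nat) : Prop := forall j t, ex_derive (fun s => Pc beta s k j) t.

Lemma hh_der tau P beta (H : Hyps tau P beta) k t (Hd : Dk beta k) :
  is_derive (fun s => hh tau beta s k) t ((beta t (S k) + beta t k) * hh tau beta t k).
Proof.
  set (c' := fun j => Derive (fun s => Pc beta s k j) t).
  assert (Hc : forall j, is_derive (fun s => Pc beta s k j) t (c' j)) by (intros; apply Derive_correct; apply Hd).
  pose proof (Ipair_der tau t (fun s => Pc beta s k) (fun s => Pc beta s k) c' c' (S k) (S k) 0 Hc Hc) as HD.
  unfold hh, ip. eapply D_ext_val; [exact HD|].
  assert (Hck : c' k = 0).
  { unfold c'. rewrite (Derive_ext _ (fun _ => 1)) by (intros; apply Pc_top). apply Derive_const. }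
  assert (E1 : Ipair tau c' (S k) (Pc beta t k) (S k) 0 t = 0).
  { change (Ipair tau c' (S k) (Pc beta t k) (S k) 0 t) with
      (Ipair tau c' k (Pc beta t k) (S k) 0 t + c' k * Isum1 tau (Pc beta t k) (S k) (k + 0) t).
    rewrite Hck, (orth_low tau P beta H) by lia. ring. }
  cbv beta. rewrite (Ipair_sym tau t (Pc beta t k) (S k) c' (S k) 0), E1.
  change (Ipair tau (Pc beta t k) (S k) (Pc beta t k) (S k) (0 + 2) t) with (ip tau beta t k k 2).
  change (Ipair tau (Pc beta t k) (S k) (Pc beta t k) (S k) 0 t) with (hh tau beta t k).
  rewrite (ip_W tau P beta H).
  replace (Z.of_nat k) with (Z.of_nat k + 0)%Z by lia. rewrite W_shift.
  set (b := fun o => bZ beta t (Z.of_nat k + o)).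
  assert (hb1 : b 1%Z = beta t (S k)) by (unfold b, bZ; f_equal; lia).
  assert (hb0 : b 0%Z = beta t k) by (unfold b, bZ; f_equal; lia).
  clearbody b. simpl. rewrite hb1, hb0. ring.
Qed.

Lemma beta_ratio tau P beta (H : Hyps tau P beta) k t : (1 <= k)%nat ->
  beta t k = hh tau beta t k / hh tau beta t (k - 1).
Proof.
  intros Hk. pose proof (hh_pos tau P beta H t (k - 1)) as Hp.
  pose proof (ip_sym tau beta t k (k - 1) 1) as Hs.
  rewrite !(ip_W tau P beta H) in Hs.
  replace (Z.of_nat k) with (Z.of_nat (k - 1) + 1)%Z in Hs by lia.
  replace (Z.of_nat (k - 1)) with (Z.of_nat (k - 1) + 0)%Z in Hs at 2 3 by lia.
  rewrite !W_shift in Hs.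
  set (b := fun o => bZ beta t (Z.of_nat (k - 1) + o)) in Hs.
  assert (hb1 : b 1%Z = beta t k) by (unfold b, bZ; f_equal; lia).
  clearbody b. simpl in Hs. rewrite hb1 in Hs.
  replace (k - 1 + 1)%nat with k in Hs by lia.
  field_simplify_eq; [|lra]. lra.
Qed.

Lemma beta_der tau P beta (H : Hyps tau P beta) k t : Dk beta k -> Dk beta (k - 1) ->
  is_derive (fun s => beta s k) t (beta t k * (beta t (S k) - beta t (k - 1)%nat)).
Proof.
  intros Dk0 Dk1. destruct k as [|k].
  - destruct H as [_ [_ [Hb0 _]]]. eapply D_ext; [intros y; symmetry; apply Hb0|].
    eapply D_ext_val; [apply D_const|]. rewrite Hb0. ring.
  - replace (S k - 1)%nat with k in * by lia.
    pose proof (hh_der tau P beta H (S k) t Dk0) as H1.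
    pose proof (hh_der tau P beta H k t Dk1) as H2.
    pose proof (hh_pos tau P beta H t k) as Hp.
    pose proof (is_derive_div _ _ t _ _ H1 H2 ltac:(lra)) as H3.
    eapply D_ext; [intros y; symmetry; rewrite (beta_ratio tau P beta H (S k) y) by lia; replace (S k - 1)%nat with k by lia; reflexivity|].
    eapply D_ext_val; [exact H3|].
    rewrite (beta_ratio tau P beta H (S k) t) by lia. replace (S k - 1)%nat with k by lia.
    field. lra.
Qed.

Lemma D_step tau P beta (H : Hyps tau P beta) k : Dk beta k -> Dk beta (k - 1) -> Dk beta (S k).
Proof.
  intros D0 D1 j t.
  apply (ex_derive_ext (K:=R_AbsRing) (V:=R_NormedModule) (fun s => shiftc (Pc beta s k) j - beta s k * Pc beta s (k - 1) j)).
  { intros s. symmetry. apply Pc_S. }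
  apply (ex_derive_minus (K:=R_AbsRing) (V:=R_NormedModule)).
  - destruct j as [|j]; simpl. apply (ex_derive_const (K:=R_AbsRing) (V:=R_NormedModule)). apply D0.
  - apply ex_derive_mult.
    + eexists. apply (beta_der tau P beta H k t D0 D1).
    + apply D1.
Qed.

Lemma D_all tau P beta (H : Hyps tau P beta) k : Dk beta k.
Proof.
  assert (D0 : Dk beta 0).
  { intros j t. apply (ex_derive_ext (K:=R_AbsRing) (V:=R_NormedModule) (fun _ => e0 j)); [reflexivity|]. apply (ex_derive_const (K:=R_AbsRing) (V:=R_NormedModule)). }
  assert (HH : forall k, Dk beta k /\ Dk beta (S k)).
  { induction k0 as [|k0 [IH1 IH2]].
    - split; auto. apply (D_step tau P beta H 0); auto.
    - split; auto. apply (D_step tau P beta H (S k0)); auto. replace (S k0 - 1)%nat with k0 by lia. auto. }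
  exact (proj1 (HH k)).
Qed.

Lemma toda tau P beta (H : Hyps tau P beta) k t :
  is_derive (fun s => beta s k) t (beta t k * (beta t (S k) - beta t (k - 1)%nat)).
Proof. apply (beta_der tau P beta H); apply (D_all tau P beta H). Qed.

Definition W5f (bm2 bm1 b0 b1 b2 : R) : R :=
  b0*b1*b2 + b0*b1^2 + 2*b0^2*b1 + b0^3 + bm1*b0*b1 + 2*bm1*b0^2 + bm1^2*b0 + bm2*bm1*b0.
Definition W3f (bm1 b0 b1 : R) : R := b0*b1 + b0^2 + bm1*b0.

Lemma string_eq tau P beta (H : Hyps tau P beta) m t :
  INR (S m) = 6 * W5f (beta t (m - 1)%nat) (beta t m) (beta t (S m)) (beta t (S (S m))) (beta t (S (S (S m))))
              - 4 * tau * W3f (beta t m) (beta t (S m)) (beta t (S (S m))) - 2 * t * beta t (S m).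
Proof.
  pose proof (ibp tau t (Pc beta t (S m)) (S (S m)) (Pc beta t m) (S m)) as HI.
  cbn [pred] in HI.
  rewrite (Ipair_sym tau t (Pc beta t (S m)) (S (S m)) (dcoef (Pc beta t m)) m 0) in HI.
  rewrite (orth_low tau P beta H t (S m) m) in HI by lia.
  change (Ipair tau (dcoef (Pc beta t (S m))) (S m) (Pc beta t m) (S m) 0 t) with
    (Ipair tau (dcoef (Pc beta t (S m))) m (Pc beta t m) (S m) 0 t +
     dcoef (Pc beta t (S m)) m * Isum1 tau (Pc beta t m) (S m) (m + 0) t) in HI.
  rewrite (orth_low tau P beta H t m m) in HI by lia.
  rewrite Nat.add_0_r, (Isum1_P tau P beta H), (orth_low tau P beta H t m m) in HI by lia.
  unfold dcoef in HI. rewrite Pc_top in HI.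
  change (Ipair tau (Pc beta t (S m)) (S (S m)) (Pc beta t m) (S m) ?k t) with (ip tau beta t (S m) m k) in HI.
  change (ip tau beta t m m 0) with (hh tau beta t m) in HI.
  rewrite !(ip_W tau P beta H) in HI.
  pose proof (hh_pos tau P beta H t m) as Hp.
  remember (hh tau beta t m) as hm. remember (INR (S m)) as N.
  replace (Z.of_nat (S m)) with (Z.of_nat m + 1)%Z in HI by lia.
  replace (Z.of_nat m) with (Z.of_nat m + 0)%Z in HI at 2 4 6 by lia.
  rewrite !W_shift in HI.
  set (b := fun o => bZ beta t (Z.of_nat m + o)) in HI.
  assert (hb0 : b 0%Z = beta t m) by (unfold b, bZ; f_equal; lia).
  assert (hb1 : b 1%Z = beta t (S m)) by (unfold b, bZ; f_equal; lia).
  assert (hb2 : b 2%Z = beta t (S (S m))) by (unfold b, bZ; f_equal; lia).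
  assert (hb3 : b 3%Z = beta t (S (S (S m)))) by (unfold b, bZ; f_equal; lia).
  assert (hbm1 : b (-1)%Z = beta t (m - 1)%nat) by (unfold b, bZ; f_equal; lia).
  clearbody b. simpl in HI. rewrite hb0, hb1, hb2, hb3, hbm1 in HI.
  apply (Rmult_eq_reg_r hm); [| lra].
  unfold W5f, W3f. transitivity (0 + N * 1 * (hm - 0) + 0); [ring|]. rewrite HI. ring.
Qed.

Lemma toda_S tau P beta (H : Hyps tau P beta) k s :
  is_derive (fun s => beta s (S k)) s (beta s (S k) * (beta s (S (S k)) - beta s k)).
Proof. pose proof (toda tau P beta H (S k) s) as T. replace (S k - 1)%nat with k in T by lia. exact T. Qed.

Theorem lemma3p3 (tau : R) (P : R -> nat -> R -> R) (beta : R -> nat -> R)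
  (Hmonic : forall t n, monic_poly_fun n (P t n))
  (Horth : forall t m n, m <> n ->
     is_RInt_R (fun x => P t m x * P t n x * omega tau t x) 0)
  (Hbeta0 : forall t, beta t 0%nat = 0)
  (Hrec0 : forall t x, P t 1%nat x = x * P t 0%nat x)
  (Hrec : forall t n x, (1 <= n)%nat ->
     P t (S n) x = x * P t n x - beta t n * P t (n - 1)%nat x) :
  forall (t : R) (n : nat), (1 <= n)%nat ->
    let b0 := fun s => beta s n in
    let b1 := fun s => beta s (S n) in
    ex_derive b0 t /\ ex_derive_n b0 2 t /\
    ex_derive b1 t /\ ex_derive_n b1 2 t /\
    Derive_n b0 2 t - 3 * (b0 t + b1 t - 2 / 9 * tau) * Derive b0 t
      + b0 t ^ 3 + 6 * b0 t ^ 2 * b1 t + 3 * b0 t * b1 t ^ 2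
      - 2 / 3 * tau * b0 t * (b0 t + 2 * b1 t) - 1 / 3 * t * b0 t
      = 1 / 6 * INR n /\
    Derive_n b1 2 t + 3 * (b0 t + b1 t - 2 / 9 * tau) * Derive b1 t
      + b1 t ^ 3 + 6 * b1 t ^ 2 * b0 t + 3 * b1 t * b0 t ^ 2
      - 2 / 3 * tau * b1 t * (2 * b0 t + b1 t) - 1 / 3 * t * b1 t
      = 1 / 6 * INR (n + 1).
Proof.
  assert (H : Hyps tau P beta) by (exact (conj Hmonic (conj Horth (conj Hbeta0 (conj Hrec0 Hrec))))).
  intros t n Hn b0 b1. destruct n as [|m]; [lia|].
  pose proof (toda tau P beta H m) as Tm.
  pose proof (toda_S tau P beta H m) as T1.
  pose proof (toda_S tau P beta H (S m)) as T2.
  pose proof (toda_S tau P beta H (S (S m))) as T3.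
  set (g0 := fun s => beta s (S m) * (beta s (S (S m)) - beta s m)).
  set (g1 := fun s => beta s (S (S m)) * (beta s (S (S (S m))) - beta s (S m))).
  assert (HD0 : forall s, Derive b0 s = g0 s) by (intros; apply is_derive_unique; apply T1).
  assert (HD1 : forall s, Derive b1 s = g1 s) by (intros; apply is_derive_unique; apply T2).
  assert (Hg0 : is_derive g0 t
     ((beta t (S m) * (beta t (S (S m)) - beta t m)) * (beta t (S (S m)) - beta t m)
      + beta t (S m) * (beta t (S (S m)) * (beta t (S (S (S m))) - beta t (S m))
                         - beta t m * (beta t (S m) - beta t (m - 1)%nat)))).
  { unfold g0. eapply D_ext_val; [apply (D_mult (fun s => beta s (S m)) (fun s => beta s (S (S m)) - beta s m)); [apply T1| apply (D_minus (fun s => beta s (S (S m))) (fun s => beta s m)); [apply T2| apply Tm]]|]. reflexivity. }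
  assert (Hg1 : is_derive g1 t
     ((beta t (S (S m)) * (beta t (S (S (S m))) - beta t (S m))) * (beta t (S (S (S m))) - beta t (S m))
      + beta t (S (S m)) * (beta t (S (S (S m))) * (beta t (S (S (S (S m)))) - beta t (S (S m)))
                         - beta t (S m) * (beta t (S (S m)) - beta t m)))).
  { unfold g1. eapply D_ext_val; [apply (D_mult (fun s => beta s (S (S m))) (fun s => beta s (S (S (S m))) - beta s (S m))); [apply T2| apply (D_minus (fun s => beta s (S (S (S m)))) (fun s => beta s (S m))); [apply T3| apply T1]]|]. reflexivity. }
  assert (E0 : forall s, Derive_n b0 1 s = g0 s) by (intros; simpl; apply HD0).
  assert (E1 : forall s, Derive_n b1 1 s = g1 s) by (intros; simpl; apply HD1).
  assert (DD0 : Derive_n b0 2 t = Derive g0 t) by (simpl; apply Derive_ext; intros; apply HD0).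
  assert (DD1 : Derive_n b1 2 t = Derive g1 t) by (simpl; apply Derive_ext; intros; apply HD1).
  rewrite (is_derive_unique _ _ _ Hg0) in DD0.
  rewrite (is_derive_unique _ _ _ Hg1) in DD1.
  pose proof (string_eq tau P beta H m t) as S0.
  pose proof (string_eq tau P beta H (S m) t) as S1.
  replace (S m - 1)%nat with m in S1 by lia.
  replace (S m + 1)%nat with (S (S m)) by lia.
  split; [eexists; apply T1|].
  split; [simpl; apply (ex_derive_ext (K:=R_AbsRing) (V:=R_NormedModule) g0); [intros; symmetry; apply HD0| eexists; exact Hg0]|].
  split; [eexists; apply T2|].
  split; [simpl; apply (ex_derive_ext (K:=R_AbsRing) (V:=R_NormedModule) g1); [intros; symmetry; apply HD1| eexists; exact Hg1]|].
  rewrite DD0, DD1, HD0, HD1, S0, S1. unfold g0, g1, b0, b1, W5f, W3f. split; field.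
Qed.
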